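(* Let $\mathcal{G}$ be the affine plane of order $3$, let $R$ be a commutative ring with $2=0$, let $A=M_R(\mathcal{G},1)$ and $A'=A/\operatorname{Ann}(A)$ (an $8$-dimensional algebra). For each of the $12$ lines $\ell$ of $\mathcal{G}$, let $A'^\ell_0$ and $A'^\ell_1$ be the eigenspaces of $\operatorname{ad}_\ell$ on $A'$ for the eigenvalues $0$ and $1$. Then for each line $\ell$, $A'=A'^\ell_0\oplus A'^\ell_1$ and \[ A'^\ell_0A'^\ell_0\subseteq A'^\ell_0,\quad A'^\ell_0A'^\ell_1\subseteq A'^\ell_1,\quad A'^\ell_1A'^\ell_1\subseteq A'^\ell_0, \] i.e. $A'$ is a decomposition algebra with fusion law $0*0=\{0\}$, $0*1=1*0=\{1\}$, $1*1=\{0\}$.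
   Context: The affine plane of order $3$ is the partial linear space of the $9$ points and $12$ lines of the affine plane over $\mathbb{F}_3$ (the Fischer space of $3^2:2$); for distinct points $p,q$ (all distinct pairs are collinear, written $p\sim q$), $p\wedge q$ is the third point of their line. The nilpotent Matsuo algebra $A=M_R(\mathcal{G},1)$ is the free $R$-module with basis the points and commutative bilinear product $p\cdot q=0$ if $p=q$, and $p\cdot q=p+q+p\wedge q$ if $p\sim q$. $\operatorname{Ann}(A)=\{v\in A: vw=0\ \forall w\in A\}$ and $A'=A/\operatorname{Ann}(A)$ with induced product. For a line $\ell$ we also write $\ell$ for the sum of its three points, and $\operatorname{ad}_\ell(v)=\ell v$ (also on $A'$); the eigenspace for $\lambda$ is $\{v:\ell v=\lambda v\}$. *)

(* Defs.v *)
From HB Require Import structures.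
From mathcomp Require Import all_boot all_order all_algebra.
Set Implicit Arguments. Unset Strict Implicit. Unset Printing Implicit Defensive.
Import GRing.Theory.
Local Open Scope ring_scope.

Definition pt : finType := ('I_3 * 'I_3)%type.

(* Third point of the line through p, q (p <> q): in F_3^2, p + q + r = 0. *)
Definition third (a b : 'I_3) : 'I_3 := inord ((6 - a - b) %% 3).
Definition wedge (p q : pt) : pt := (third p.1 q.1, third p.2 q.2).

Definition is_line (L : {set pt}) : Prop :=
  exists p q : pt, p != q /\ L = [set p; q; wedge p q].

Notation alg R := {ffun pt -> R^o}.

Definition ev (R : comPzRingType) (p : pt) : alg R :=
  [ffun q => (q == p)%:R].

Definition pmul (R : comPzRingType) (p q : pt) : alg R :=
  if p == q then 0 else ev R p + ev R q + ev R (wedge p q).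

Definition amul (R : comPzRingType) (x y : alg R) : alg R :=
  \sum_(p : pt) \sum_(q : pt) (x p * y q) *: pmul R p q.

Definition inAnn (R : comPzRingType) (v : alg R) : Prop :=
  forall w : alg R, amul v w = 0.

Definition lineA (R : comPzRingType) (L : {set pt}) : alg R :=
  \sum_(p in L) ev R p.

(* v (a representative of its class in A' = A/Ann(A)) lies in the
   lambda-eigenspace of ad_L on A', i.e. L v - lambda v = 0 in A'. *)
Definition eigA' (R : comPzRingType) (lam : R) (L : {set pt}) (v : alg R) : Prop :=
  inAnn (amul (lineA R L) v - lam *: v).

(* Main.v *)
Require Import Defs.
From mathcomp Require Import all_boot all_order all_algebra.
From mathcomp Require Import zify.
Import GRing.Theory.
Local Open Scope ring_scope.

Definition I9 := iota 0 9.
Definition w (i j : nat) : nat :=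
  (3 * ((6 - i %/ 3 - j %/ 3) %% 3) + (6 - i %% 3 - j %% 3) %% 3)%N.
Definition cv (i j k : nat) : bool := (i != j) && ((k == i) (+) (k == j) (+) (k == w i j)).
Definition xorl (s : seq bool) := foldr addb false s.
Definition apairs : seq (nat * nat) := [seq (i, j) | i <- I9, j <- I9].
Definition PL : seq (seq (nat * nat)) := [:: [:: (0,1); (0,2); (0,3); (0,4); (0,5); (0,6); (0,7); (0,8); (1,0); (1,2); (2,0); (2,1); (3,0); (3,6); (4,0); (4,8); (5,0); (5,7); (6,0); (6,3); (7,0); (7,5); (8,0); (8,4)]; [:: (0,1); (0,2); (1,0); (1,2); (1,3); (1,4); (1,5); (1,6); (1,7); (1,8); (2,0); (2,1); (3,1); (3,8); (4,1); (4,7); (5,1); (5,6); (6,1); (6,5); (7,1); (7,4); (8,1); (8,3)]; [:: (0,1); (0,2); (1,0); (1,2); (2,0); (2,1); (2,3); (2,4); (2,5); (2,6); (2,7); (2,8); (3,2); (3,7); (4,2); (4,6); (5,2); (5,8); (6,2); (6,4); (7,2); (7,3); (8,2); (8,5)]; [:: (0,3); (0,6); (1,3); (1,8); (2,3); (2,7); (3,0); (3,1); (3,2); (3,4); (3,5); (3,6); (3,7); (3,8); (4,3); (4,5); (5,3); (5,4); (6,0); (6,3); (7,2); (7,3); (8,1); (8,3)]; [:: (0,4); (0,8); (1,4); (1,7); (2,4); (2,6); (3,4); (3,5); (4,0); (4,1); (4,2); (4,3); (4,5); (4,6); (4,7); (4,8); (5,3); (5,4); (6,2); (6,4); (7,1);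 (7,4); (8,0); (8,4)]; [:: (0,5); (0,7); (1,5); (1,6); (2,5); (2,8); (3,4); (3,5); (4,3); (4,5); (5,0); (5,1); (5,2); (5,3); (5,4); (5,6); (5,7); (5,8); (6,1); (6,5); (7,0); (7,5); (8,2); (8,5)]; [:: (0,3); (0,6); (1,5); (1,6); (2,4); (2,6); (3,0); (3,6); (4,2); (4,6); (5,1); (5,6); (6,0); (6,1); (6,2); (6,3); (6,4); (6,5); (6,7); (6,8); (7,6); (7,8); (8,6); (8,7)]; [:: (0,5); (0,7); (1,4); (1,7); (2,3); (2,7); (3,2); (3,7); (4,1); (4,7); (5,0); (5,7); (6,7); (6,8); (7,0); (7,1); (7,2); (7,3); (7,4); (7,5); (7,6); (7,8); (8,6); (8,7)]; [:: (0,4); (0,8); (1,3); (1,8); (2,5); (2,8); (3,1); (3,8); (4,0); (4,8); (5,2); (5,8); (6,7); (6,8); (7,6); (7,8); (8,0); (8,1); (8,2); (8,3); (8,4); (8,5); (8,6); (8,7)]].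
Definition plist k := nth [::] PL k.
Lemma plist_ok : all (fun k => plist k == [seq x <- apairs | cv x.1 x.2 k]) I9.
Proof. by vm_compute. Qed.
Definition smul (s t : seq bool) : seq bool :=
  [seq xorl [seq nth false s x.1 && nth false t x.2 | x <- plist k] | k <- I9].
Definition sadd (s t : seq bool) : seq bool := [seq nth false s k (+) nth false t k | k <- I9].
Definition eb i : seq bool := [seq k == i | k <- I9].
Definition pconst (s : seq bool) := all (fun k => nth false s k == nth false s 0) I9.
Definition lb ia ib : seq bool := [seq [|| k == ia, k == ib | k == w ia ib] | k <- I9].
Definition lines12 := [seq lb x.1 x.2 | x <- [:: (0,1); (0,3); (0,4); (0,5); (1,3); (1,4); (1,5); (2,3); (2,4); (2,5); (3,4); (6,7)]].
Lemma lines_ok : all (fun i => all (fun j => (i != j) ==> (lb i j \in lines12)) I9) I9.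
Proof. by vm_compute. Qed.
Definition chk (l : seq bool) : bool :=
  let E := smul l in
  let P0 := fun v => sadd v (E v) in
  let PA := [seq P0 (eb a) | a <- I9] in
  let EA := [seq E (eb a) | a <- I9] in
  all (fun a => pconst (sadd (E (nth [::] EA a)) (nth [::] EA a)) &&
     all (fun b =>
       [&& pconst (E (smul (nth [::] PA a) (nth [::] PA b))),
           pconst (let X := smul (nth [::] PA a) (nth [::] EA b) in sadd (E X) X) &
           pconst (E (smul (nth [::] EA a) (nth [::] EA b)))]) I9) I9.
Definition jt := [seq true | k <- I9].
Lemma jt_ok : all (fun i => smul jt (eb i) == [seq false | k <- I9]) I9.
Proof. by vm_compute. Qed.
Lemma chk_ok : all chk lines12.
Proof. by vm_compute. Qed.

Lemma sum_allpairs (r1 r2 : seq nat) (V : nmodType) (F : nat * nat -> V) :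
  \sum_(x <- [seq (i, j) | i <- r1, j <- r2]) F x = \sum_(i <- r1) \sum_(j <- r2) F (i, j).
Proof.
elim: r1 => [|i r1 IH]; first by rewrite !big_nil.
rewrite /= big_cat big_cons IH big_map; reflexivity.
Qed.


Lemma inI9 {k} : (k < 9)%N -> k \in I9.
Proof. by move=> hk; rewrite mem_iota leq0n hk. Qed.

Section Abs.
Variable R : comPzRingType.
Hypothesis char2 : 2%:R = 0 :> R.

Lemma scaleoE (a b : R) : a *: (b : R^o) = a * b.
Proof. by []. Qed.

Lemma natr_xor (a b : bool) : ((a : nat)%:R + (b : nat)%:R : R) = ((a (+) b) : nat)%:R.
Proof. by case: a; case: b; rewrite /= ?addr0 ?add0r // -char2. Qed.

Lemma sum_xor (I : Type) (s : seq I) (f : I -> bool) :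
  \sum_(i <- s) ((f i : nat)%:R : R) = (xorl (map f s) : nat)%:R.
Proof. by elim: s => [|x s IH]; rewrite ?big_nil ?big_cons ?IH ?natr_xor. Qed.

Lemma opp_id (x : R) : - x = x.
Proof.
have h : x + x = 0 by rewrite -mulr2n -mulr_natr char2 mulr0.
by rewrite -[LHS]addr0 -h addrA addNr add0r.
Qed.

Lemma oppA (v : alg R) : - v = v.
Proof. by apply/ffunP => r; rewrite ffunE opp_id. Qed.

Lemma addvv (v : alg R) : v + v = 0.
Proof. by rewrite -{1}(oppA v) addNr. Qed.

Lemma thirdC (a b : 'I_3) : third a b = third b a.
Proof. by rewrite /third subnAC. Qed.

Lemma pmulC (p q : pt) : pmul R p q = pmul R q p.
Proof.
rewrite /pmul eq_sym; case: eqP => // _.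
by rewrite /wedge thirdC [third p.2 _]thirdC (addrC (ev R p)).
Qed.

Lemma amul_lin1 (c : R) (x y z : alg R) :
  amul (c *: x + y) z = c *: amul x z + amul y z.
Proof.
rewrite /amul scaler_sumr -big_split; apply: eq_bigr => p _.
rewrite scaler_sumr -big_split; apply: eq_bigr => q _.
by rewrite !ffunE /= scalerA -scalerDl mulrDl mulrA.
Qed.

Lemma amul_lin2 (c : R) (x y z : alg R) :
  amul x (c *: y + z) = c *: amul x y + amul x z.
Proof.
rewrite /amul scaler_sumr -big_split; apply: eq_bigr => p _.
rewrite scaler_sumr -big_split; apply: eq_bigr => q _.
by rewrite !ffunE /= scalerA -scalerDl mulrDr mulrCA.
Qed.

Lemma amulC (x y : alg R) : amul x y = amul y x.
Proof.
rewrite /amul exchange_big; apply: eq_bigr => p _; apply: eq_bigr => q _.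
by rewrite mulrC pmulC.
Qed.

Lemma amul0l (y : alg R) : amul 0 y = 0.
Proof.
rewrite /amul big1 // => p _; rewrite big1 // => q _.
by rewrite ffunE mul0r scale0r.
Qed.

Lemma amulDl (x y z : alg R) : amul (x + y) z = amul x z + amul y z.
Proof. by rewrite -[x]scale1r amul_lin1 !scale1r. Qed.

Lemma amulDr (x y z : alg R) : amul x (y + z) = amul x y + amul x z.
Proof. by rewrite -[y]scale1r amul_lin2 !scale1r. Qed.

Lemma inAnn0 : inAnn (0 : alg R).
Proof. by move=> v; rewrite amul0l. Qed.

Lemma inAnnL (c : R) (x y : alg R) : inAnn x -> inAnn y -> inAnn (c *: x + y).
Proof. by move=> hx hy v; rewrite amul_lin1 hx hy scaler0 addr0. Qed.

Lemma inAnnD (x y : alg R) : inAnn x -> inAnn y -> inAnn (x + y).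
Proof. by move=> hx hy; rewrite -[x]scale1r; apply: inAnnL. Qed.

Definition lin (f : alg R -> alg R) := forall c x y, f (c *: x + y) = c *: f x + f y.

Lemma vdecomp (v : alg R) : v = \sum_(p : pt) v p *: ev R p.
Proof.
apply/ffunP => r; rewrite sum_ffunE (bigD1 r) //= big1 ?addr0.
  by rewrite !ffunE eqxx scaleoE mulr1.
by move=> p /negPf hp; rewrite !ffunE eq_sym hp scaleoE mulr0.
Qed.

Lemma lin0 f : lin f -> f 0 = 0.
Proof.
move=> lf; have h := lf 1 0 0; rewrite scaler0 addr0 scale1r in h.
rewrite -{1}[f 0]addr0 in h; exact: esym (addrI _ h).
Qed.

Lemma ann_lin f : lin f -> (forall p, inAnn (f (ev R p))) -> forall u, inAnn (f u).
Proof.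
move=> lf he u; rewrite (vdecomp u); elim: (index_enum pt) => [|p s IH].
  by rewrite big_nil lin0 //; exact: inAnn0.
by rewrite big_cons lf; apply: inAnnL.
Qed.

Lemma lin_zero f : lin f -> (forall p, f (ev R p) = 0) -> forall u, f u = 0.
Proof.
move=> lf he u; rewrite (vdecomp u); elim: (index_enum pt) => [|p s IH].
  by rewrite big_nil lin0.
by rewrite big_cons lf he IH scaler0 addr0.
Qed.

Lemma ann_bilin (B : alg R -> alg R -> alg R) :
  (forall x, lin (B x)) -> (forall y, lin (B^~ y)) ->
  (forall p q, inAnn (B (ev R p) (ev R q))) -> forall u v, inAnn (B u v).
Proof.
move=> l1 l2 h u v; move: u; apply: (@ann_lin _ (l2 v)) => p.
by move: v; apply: (@ann_lin _ (l1 (ev R p))) => q; apply: h.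
Qed.


Definition pidx (p : pt) : nat := (3 * p.1 + p.2)%N.

Lemma pidx_lt p : (pidx p < 9)%N.
Proof. case: p => a b; rewrite /pidx /=; have := ltn_ord a; have := ltn_ord b; lia. Qed.

Lemma pidx_inj p q : (pidx p == pidx q) = (p == q).
Proof.
case: p q => a b [c d]; rewrite /pidx /=; apply/eqP/eqP => [h|[-> ->]] //.
have := ltn_ord a; have := ltn_ord b; have := ltn_ord c; have := ltn_ord d => *.
have [e1 e2] : (a : nat) = c /\ (b : nat) = d by lia.
by congr pair; apply: val_inj.
Qed.

Lemma div3 (a b : 'I_3) : ((3 * a + b) %/ 3 = a)%N.
Proof. by rewrite mulnC divnMDl // divn_small ?addn0. Qed.

Lemma mod3 (a b : 'I_3) : ((3 * a + b) %% 3 = b)%N.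
Proof. by rewrite mulnC modnMDl modn_small. Qed.

Lemma thirdE (a b : 'I_3) : (third a b : nat) = ((6 - a - b) %% 3)%N.
Proof. by rewrite /third inordK // ltn_pmod. Qed.

Lemma pidx_wedge p q : pidx (wedge p q) = w (pidx p) (pidx q).
Proof. by case: p q => a b [c d]; rewrite /pidx /w /= !div3 !mod3 !thirdE. Qed.

Definition sv (s : seq bool) : alg R := [ffun r => ((nth false s (pidx r) : nat)%:R : R)].

Lemma nthI9 (T : Type) (x0 : T) (f : nat -> T) k : (k < 9)%N -> nth x0 [seq f i | i <- I9] k = f k.
Proof. by move=> hk; rewrite (nth_map 0%N) ?size_iota // nth_iota. Qed.

Lemma sum_pt (F : nat -> R) : \sum_(p : pt) F (pidx p) = \sum_(i <- I9) F i.
Proof.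
rewrite -(big_map pidx xpredT F); apply: perm_big; apply: uniq_perm.
- rewrite map_inj_uniq ?index_enum_uniq // => p q /eqP; by rewrite pidx_inj => /eqP.
- exact: iota_uniq.
move=> i; rewrite mem_iota /=; apply/mapP/idP => [[p _ ->]|hi]; first exact: pidx_lt.
have h1 : (i %/ 3 < 3)%N by rewrite ltn_divLR.
have h2 : (i %% 3 < 3)%N by rewrite ltn_pmod.
exists (inord (i %/ 3), inord (i %% 3)); first exact: mem_index_enum.
by rewrite /pidx /= !inordK // mulnC -divn_eq.
Qed.

Lemma pmul_at p q r : pmul R p q r = ((cv (pidx p) (pidx q) (pidx r) : nat)%:R).
Proof.
rewrite /pmul /cv pidx_inj; case: eqP => [->|_] /=; first by rewrite ffunE.
by rewrite !ffunE !natr_xor -pidx_wedge !pidx_inj.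
Qed.

Lemma amul_sv s t : amul (sv s) (sv t) = sv (smul s t).
Proof.
apply/ffunP => r; rewrite /amul sum_ffunE.
have hr := pidx_lt r.
rewrite ffunE /smul nthI9 //.
transitivity (\sum_(p : pt) \sum_(q : pt)
   (((nth false s (pidx p) && nth false t (pidx q) && cv (pidx p) (pidx q) (pidx r)) : nat)%:R : R)).
  apply: eq_bigr => p _; rewrite sum_ffunE; apply: eq_bigr => q _.
  by rewrite !ffunE scaleoE pmul_at -!natrM !mulnb.
rewrite (sum_pt (fun i => \sum_(q : pt) (((nth false s i && nth false t (pidx q) && cv i (pidx q) (pidx r)) : nat)%:R : R))).
under eq_bigr => i _ do rewrite (sum_pt (fun j => (((nth false s i && nth false t j && cv i j (pidx r)) : nat)%:R : R))).
transitivity (\sum_(x <- apairs) (((nth false s x.1 && nth false t x.2 && cv x.1 x.2 (pidx r)) : nat)%:R : R)).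
  by rewrite /apairs sum_allpairs.
have -> : plist (pidx r) = [seq x <- apairs | cv x.1 x.2 (pidx r)].
  exact: (eqP (allP plist_ok _ (inI9 hr))).
rewrite -sum_xor big_filter [RHS]big_mkcond; apply: eq_bigr => x _.
by case: cv; rewrite ?andbT ?andbF.
Qed.

Lemma ev_sv p : ev R p = sv (eb (pidx p)).
Proof. by apply/ffunP => r; rewrite !ffunE /eb nthI9 ?pidx_lt // pidx_inj. Qed.

Lemma sadd_sv s t : sv s + sv t = sv (sadd s t).
Proof. by apply/ffunP => r; rewrite !ffunE /sadd nthI9 ?pidx_lt // natr_xor. Qed.

Lemma sum_ind (L : {set pt}) r : \sum_(p in L) ev R p r = ((r \in L) : nat)%:R.
Proof.
case: (boolP (r \in L)) => h.
  rewrite (bigD1 r) //= big1 ?addr0; first by rewrite ffunE eqxx.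
  by move=> p /andP[_ /negPf hp]; rewrite ffunE eq_sym hp.
by rewrite big1 // => p hp; rewrite ffunE; case: eqP => // e; rewrite e hp in h.
Qed.

Lemma line_sv a b : lineA R [set a; b; wedge a b] = sv (lb (pidx a) (pidx b)).
Proof.
apply/ffunP => r; rewrite /lineA sum_ffunE sum_ind ffunE /lb nthI9 ?pidx_lt //.
by rewrite -pidx_wedge !pidx_inj !inE orbA.
Qed.

Lemma sv_const s : pconst s -> sv s = if nth false s 0 then sv jt else 0.
Proof.
move/allP=> h; apply/ffunP => r; have hr := pidx_lt r.
have /eqP e := h _ (inI9 hr).
case: ifP => h0; rewrite !ffunE e h0 //.
by rewrite /jt nthI9.
Qed.

Lemma ann_jt : inAnn (sv jt).
Proof.
move=> v; move: v; apply: (@lin_zero (amul (sv jt))) => [c x y|p]; first exact: amul_lin2.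
rewrite ev_sv amul_sv.
rewrite (eqP (allP jt_ok _ (inI9 (pidx_lt p)))).
by apply/ffunP => r; rewrite !ffunE nthI9 ?pidx_lt.
Qed.

Lemma pconst_ann s : pconst s -> inAnn (sv s).
Proof. by move/sv_const => ->; case: ifP => _; [exact: ann_jt | exact: inAnn0]. Qed.

Lemma chk_facts l : chk l -> forall a b, (a < 9)%N -> (b < 9)%N ->
  [/\ pconst (sadd (smul l (smul l (eb a))) (smul l (eb a))),
      pconst (smul l (smul (sadd (eb a) (smul l (eb a))) (sadd (eb b) (smul l (eb b))))),
      pconst (sadd (smul l (smul (sadd (eb a) (smul l (eb a))) (smul l (eb b))))
                   (smul (sadd (eb a) (smul l (eb a))) (smul l (eb b)))) &
      pconst (smul l (smul (smul l (eb a)) (smul l (eb b))))].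
Proof.
move=> /allP h a b ha hb; have := h _ (inI9 ha); cbv zeta beta.
move=> /andP[h4 /allP hab]; have := hab _ (inI9 hb); move=> /and3P[h1 h2 h3].
by rewrite !nthI9 in h4 h1 h2 h3.
Qed.

Section Line.
Variable l : seq bool.
Hypothesis hl : chk l.

Local Notation E := (amul (sv l)).
Definition P0 (v : alg R) := v + E v.

Lemma linE : lin E.
Proof. by move=> c x y; rewrite amul_lin2. Qed.

Lemma linP0 : lin P0.
Proof. by move=> c x y; rewrite /P0 linE scalerDr addrACA. Qed.

Lemma P0_sv s : P0 (sv s) = sv (sadd s (smul l s)).
Proof. by rewrite /P0 amul_sv sadd_sv. Qed.

Lemma I4 v : inAnn (E (E v) + E v).
Proof.
move: v; apply: (@ann_lin (fun v => E (E v) + E v)).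
  by move=> c x y /=; rewrite !linE scalerDr addrACA.
move=> p; rewrite ev_sv !amul_sv sadd_sv; apply: pconst_ann.
by have [] := @chk_facts _ hl _ _ (pidx_lt p) (pidx_lt p).
Qed.

Lemma I1 u v : inAnn (E (amul (P0 u) (P0 v))).
Proof.
move: u v; apply: (@ann_bilin (fun x y => E (amul (P0 x) (P0 y)))).
- by move=> x c y z /=; rewrite linP0 amul_lin2 linE.
- by move=> y c x z /=; rewrite linP0 amul_lin1 linE.
move=> p q; rewrite !ev_sv !P0_sv !amul_sv; apply: pconst_ann.
by have [] := @chk_facts _ hl _ _ (pidx_lt p) (pidx_lt q).
Qed.

Lemma I2 u v : inAnn (E (amul (P0 u) (E v)) + amul (P0 u) (E v)).
Proof.
move: u v; apply: (@ann_bilin (fun x y => E (amul (P0 x) (E y)) + amul (P0 x) (E y))).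
- by move=> x c y z /=; rewrite !amul_lin2 scalerDr addrACA.
- by move=> y c x z /=; rewrite linP0 !amul_lin1 linE scalerDr addrACA.
move=> p q; rewrite !ev_sv P0_sv !amul_sv sadd_sv; apply: pconst_ann.
by have [] := @chk_facts _ hl _ _ (pidx_lt p) (pidx_lt q).
Qed.

Lemma I3 u v : inAnn (E (amul (E u) (E v))).
Proof.
move: u v; apply: (@ann_bilin (fun x y => E (amul (E x) (E y)))).
- by move=> x c y z /=; rewrite linE amul_lin2 linE.
- by move=> y c x z /=; rewrite linE amul_lin1 linE.
move=> p q; rewrite !ev_sv !amul_sv; apply: pconst_ann.
by have [] := @chk_facts _ hl _ _ (pidx_lt p) (pidx_lt q).
Qed.

Lemma repl0 u w : inAnn (E u) -> amul u w = amul (P0 u) w.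
Proof. by move=> h; rewrite /P0 amulDl h addr0. Qed.

Lemma repl1 u w : inAnn (E u + u) -> amul u w = amul (E u) w.
Proof.
move=> h; have -> : E u = (E u + u) + u by rewrite -addrA addvv addr0.
by rewrite amulDl h add0r.
Qed.

End Line.

End Abs.

Theorem corollary5p18 (R : comPzRingType) (char2 : 2%:R = 0 :> R)
  (L : {set pt}) (hL : is_line L) :
  (* A' = A'_0 + A'_1 *)
  (forall v : alg R, exists v0 v1 : alg R,
      eigA' 0 L v0 /\ eigA' 1 L v1 /\ inAnn (v - v0 - v1)) /\
  (* the sum is direct: A'_0 /\ A'_1 = 0 in A' *)
  (forall v : alg R, eigA' 0 L v -> eigA' 1 L v -> inAnn v) /\
  (* fusion law *)
  (forall u w : alg R, eigA' 0 L u -> eigA' 0 L w -> eigA' 0 L (amul u w)) /\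
  (forall u w : alg R, eigA' 0 L u -> eigA' 1 L w -> eigA' 1 L (amul u w)) /\
  (forall u w : alg R, eigA' 1 L u -> eigA' 0 L w -> eigA' 1 L (amul u w)) /\
  (forall u w : alg R, eigA' 1 L u -> eigA' 1 L w -> eigA' 0 L (amul u w)).
Proof.
case: hL => a [b [hab ->]].
set l := lb (pidx a) (pidx b).
have hl : chk l.
  apply: (allP chk_ok); rewrite /l.
  have := allP lines_ok _ (inI9 (pidx_lt a)) => /allP /(_ _ (inI9 (pidx_lt b))) /implyP.
  by apply; rewrite pidx_inj.
rewrite /eigA' line_sv -/l.
have oA := @oppA R char2; have aV := @addvv R char2.
have I1' := @I1 R char2 l hl; have I2' := @I2 R char2 l hl; have I3' := @I3 R char2 l hl; have I4' := @I4 R char2 l hl.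
split; [|split; [|split; [|split; [|split]]]].
- move=> v; exists (v + amul (sv R l) v), (amul (sv R l) v).
  rewrite scale0r subr0 scale1r !oA; split; [|split].
  + by rewrite amulDr addrC; apply: I4'.
  + exact: I4'.
  + by rewrite addrA aV add0r aV; apply: inAnn0.
- move=> v; rewrite scale0r subr0 scale1r oA => h0 h1.
  rewrite (_ : v = amul (sv R l) v + (amul (sv R l) v + v)); first exact: inAnnD.
  by rewrite addrA aV add0r.
- move=> u w; rewrite !scale0r !subr0 => hu hw.
  have -> : amul u w = amul (P0 R l w) (P0 R l u) by rewrite (@repl0 R l _ _ hu) amulC (@repl0 R l _ _ hw).
  exact: I1'.
- move=> u w; rewrite !scale0r !subr0 !scale1r !oA => hu hw.
  have -> : amul u w = amul (P0 R l u) (amul (sv R l) w).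
    by rewrite (@repl0 R l _ _ hu) amulC (@repl1 R char2 l _ _ hw) amulC.
  exact: I2'.
- move=> u w; rewrite !scale0r !subr0 !scale1r !oA => hu hw.
  have -> : amul u w = amul (P0 R l w) (amul (sv R l) u).
    by rewrite amulC (@repl0 R l _ _ hw) amulC (@repl1 R char2 l _ _ hu) amulC.
  exact: I2'.
- move=> u w; rewrite !scale0r !subr0 !scale1r !oA => hu hw.
  have -> : amul u w = amul (amul (sv R l) w) (amul (sv R l) u).
    by rewrite (@repl1 R char2 l _ _ hu) amulC (@repl1 R char2 l _ _ hw).
  exact: I3'.
Qed.
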